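(* Let $X$ be a metric space, $\mathcal M=\{M_1,\dots,M_n\}\subset\mathcal P^f_{\mathrm{Cl}}(X)$, $\Sigma(\mathcal M)\ne\emptyset$ and $d\in\Omega(\mathcal M)$. Then every compact $K\in\Sigma_d(\mathcal M)$ contains (as a subset) at least one element of $\Sigma_d(\mathcal M)$ that is minimal with respect to inclusion in $\Sigma_d(\mathcal M)$.
   Context: For a metric space $X$, $p\in X$, $A\subset X$: $|p\,A|=\inf_{a\in A}|p\,a|$ ($=\infty$ if $A=\emptyset$); for $0\le r<\infty$, $B_r(A)=\{p:|p\,A|\le r\}$. For nonempty $A,B$, $d_H(A,B)=\max\{\sup_{a\in A}|a\,B|,\sup_{b\in B}|b\,A|\}\in[0,\infty]$. $\mathcal P_{\mathrm{Cl}}(X)$ is the set of nonempty closed subsets of $X$ with $d_H$. A finiteness class of $\mathcal P_{\mathrm{Cl}}(X)$ is an equivalence class of the relation $A\sim B\iff d_H(A,B)<\infty$; $\mathcal P^f_{\mathrm{Cl}}(X)$ denotes a fixed finiteness class. For finite $\mathcal M=\{M_1,\dots,M_n\}\subset\mathcal P^f_{\mathrm{Cl}}(X)$, set $S_{\mathcal M}(Y)=\sum_{i=1}^n d_H(Y,M_i)$ for $Y\in\mathcal P^f_{\mathrm{Cl}}(X)$; $\Sigma(\mathcal M)$ is the set of all minimizers of $S_{\mathcal M}$ over $\mathcal P^f_{\mathrm{Cl}}(X)$. For $K\in\Sigma(\mathcal M)$, $d(K)=(d_H(K,M_1),\dots,d_H(K,M_n))$; $\Omega(\mathcal M)=\{d(K):K\in\Sigma(\mathcal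 M)\}$; for $d=(d_1,\dots,d_n)\in\Omega(\mathcal M)$, $\Sigma_d(\mathcal M)=\{K\in\Sigma(\mathcal M):d(K)=d\}$, partially ordered by inclusion. *)

(* Defs.v *)
From mathcomp Require Import all_boot all_order all_algebra.
From mathcomp Require Import all_classical all_reals ereal.
From Stdlib Require List.
Set Implicit Arguments. Unset Strict Implicit. Unset Printing Implicit Defensive.
Import Order.TTheory GRing.Theory Num.Theory.
Local Open Scope classical_set_scope.
Local Open Scope ring_scope.

Section MetricDefs.
Context {R : realType} {X : Type} (dist : X -> X -> R).

Definition is_metric : Prop :=
  [/\ forall x y, 0 <= dist x y,
      forall x y, dist x y = 0 <-> x = y,
      forall x y, dist x y = dist y x
    & forall x y z, dist x z <= dist x y + dist y z].

Definition mopen (U : set X) : Prop :=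
  forall x, U x -> exists2 e : R, 0 < e & forall y, dist x y < e -> U y.

Definition mclosed (A : set X) : Prop :=
  forall x, (forall e : R, 0 < e -> exists a, A a /\ dist x a < e) -> A x.

Definition mcompact (K : set X) : Prop :=
  forall (I : Type) (U : I -> set X), (forall i, mopen (U i)) ->
    K `<=` \bigcup_(i in setT) U i ->
    exists s : seq I, K `<=` (fun x => exists2 i, List.In i s & U i x).

(* |p A| = inf_{a in A} |p a|  (= +oo if A is empty) *)
Definition dist_pt_set (p : X) (A : set X) : \bar R :=
  ereal_inf [set (dist p a)%:E | a in A].

Definition hausdorff (A B : set X) : \bar R :=
  maxe (ereal_sup [set dist_pt_set a B | a in A])
       (ereal_sup [set dist_pt_set b A | b in B]).

Definition PCl (A : set X) : Prop := (exists a, A a) /\ mclosed A.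

(* the finiteness class of F (F itself in P_Cl(X)) *)
Definition in_class (F A : set X) : Prop :=
  PCl A /\ (hausdorff A F < +oo)%E.

Section Family.
Variables (F : set X) (n : nat) (M : 'I_n -> set X).

Definition S_M (Y : set X) : \bar R := (\sum_(i < n) hausdorff Y (M i))%E.

Definition Sigma (K : set X) : Prop :=
  in_class F K /\ forall Y, in_class F Y -> (S_M K <= S_M Y)%E.

Definition dvec (K : set X) : 'I_n -> \bar R := fun i => hausdorff K (M i).

Definition Omega (d : 'I_n -> \bar R) : Prop := exists2 K, Sigma K & dvec K = d.

Definition Sigma_d (d : 'I_n -> \bar R) (K : set X) : Prop :=
  Sigma K /\ dvec K = d.

Definition minimal_in_Sigma_d (d : 'I_n -> \bar R) (K0 : set X) : Prop :=
  Sigma_d d K0 /\ forall K', Sigma_d d K' -> K' `<=` K0 -> K' = K0.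
End Family.
End MetricDefs.

(* Main.v *)
Require Import Defs.
From mathcomp Require Import all_boot all_order all_algebra.
From mathcomp Require Import all_classical all_reals ereal.
Import Order.TTheory GRing.Theory Num.Theory.
Local Open Scope classical_set_scope.
Local Open Scope ring_scope.

Section Aux.
Variables (R : realType) (X : Type) (dist : X -> X -> R).
Hypothesis Hm : is_metric dist.

Let dge0 x y : 0 <= dist x y. Proof. by case: Hm. Qed.
Let dxx x : dist x x = 0. Proof. by case: Hm => _ h _ _; apply/h. Qed.
Let dsym x y : dist x y = dist y x. Proof. by case: Hm. Qed.
Let dtri x y z : dist x z <= dist x y + dist y z. Proof. by case: Hm. Qed.

Lemma dpt_le p (A : set X) a : A a -> (dist_pt_set dist p A <= (dist p a)%:E)%E.
Proof. by move=> Aa; apply: ereal_inf_lbound; exists a. Qed.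

Lemma dpt_ge0 p (A : set X) : (0 <= dist_pt_set dist p A)%E.
Proof. by apply: le_ereal_inf_tmp => _ [a _ <-]; rewrite lee_fin. Qed.

Lemma dpt_lt p (A : set X) r : (dist_pt_set dist p A < r%:E)%E ->
  exists2 a, A a & dist p a < r.
Proof. by move=> /ereal_inf_lt [_ [a Aa <-]]; rewrite lte_fin => h; exists a. Qed.

Lemma haus_le1 (A B : set X) a : A a ->
  (dist_pt_set dist a B <= hausdorff dist A B)%E.
Proof.
move=> Aa; rewrite /hausdorff le_max; apply/orP; left.
by apply: ereal_sup_ubound; exists a.
Qed.

Lemma haus_le2 (A B : set X) b : B b ->
  (dist_pt_set dist b A <= hausdorff dist A B)%E.
Proof.
move=> Bb; rewrite /hausdorff le_max; apply/orP; right.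
by apply: ereal_sup_ubound; exists b.
Qed.

Lemma haus_leP (A B : set X) h :
  (forall a, A a -> (dist_pt_set dist a B <= h)%E) ->
  (forall b, B b -> (dist_pt_set dist b A <= h)%E) ->
  (hausdorff dist A B <= h)%E.
Proof.
move=> h1 h2; rewrite /hausdorff ge_max; apply/andP; split;
  apply: ge_ereal_sup => _ [x Hx <-]; auto.
Qed.

Lemma haus_sym (A B : set X) : hausdorff dist A B = hausdorff dist B A.
Proof. by rewrite /hausdorff maxC. Qed.

Lemma haus_ge0 (A B : set X) b : B b -> (0 <= hausdorff dist A B)%E.
Proof. move=> Bb; have h1 := dpt_ge0 b A; have h2 := haus_le2 A B b Bb.
exact: (le_trans h1 h2). Qed.

Lemma dpt_tri p y (Z : set X) :
  (dist_pt_set dist p Z <= (dist p y)%:E + dist_pt_set dist y Z)%E.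
Proof.
apply/lee_addgt0Pr => e' e'0.
case E: (dist_pt_set dist y Z) => [v| |].
- have /dpt_lt [z Zz dz] : (dist_pt_set dist y Z < (v + e')%:E)%E.
    by rewrite E lte_fin ltrDl.
  apply: le_trans (dpt_le p Z z Zz) _.
  by rewrite -!EFinD lee_fin -addrA; apply: le_trans (dtri p y z) _;
    rewrite lerD2l ltW.
- by rewrite addey // leey.
- by have := dpt_ge0 y Z; rewrite E.
Qed.

Lemma haus_ge0l (A B : set X) a : A a -> (0 <= hausdorff dist A B)%E.
Proof. move=> Aa; have h1 := dpt_ge0 a B; have h2 := haus_le1 A B a Aa.
exact: (le_trans h1 h2). Qed.

Lemma tri_aux p (Y Z : set X) h h' : (0 <= h')%E ->
  (dist_pt_set dist p Y <= h)%E ->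
  (forall y, Y y -> (dist_pt_set dist y Z <= h')%E) ->
  (dist_pt_set dist p Z <= h + h')%E.
Proof.
move=> h'0 hY hZ; apply/lee_addgt0Pr => e e0.
move: hY; case: h => [r| |] hY.
- have /dpt_lt [y Yy dy] : (dist_pt_set dist p Y < (r + e)%:E)%E.
    by apply: le_lt_trans hY _; rewrite lte_fin ltrDl.
  have -> : (r%:E + h' + e%:E = (r + e)%:E + h')%E.
    by rewrite EFinD -addeA (addeC h') addeA.
  apply: (@le_trans _ _ ((dist p y)%:E + dist_pt_set dist y Z)%E).
    exact: dpt_tri.
  by apply: leeD; [rewrite lee_fin ltW | exact: hZ].
- rewrite addye ?leey //; apply/negP => /eqP h'n; move: h'0; rewrite h'n //.
- by have := le_trans (dpt_ge0 p Y) hY; rewrite leeNy_eq.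
Qed.

Lemma haus_tri (A B C : set X) b0 : B b0 ->
  (hausdorff dist A C <= hausdorff dist A B + hausdorff dist B C)%E.
Proof.
move=> Bb0; apply: haus_leP => [a Aa|c Cc].
- apply: tri_aux; first exact: haus_ge0l Bb0.
  + exact: haus_le1.
  + by move=> y By; apply: haus_le1.
- rewrite addeC; apply: tri_aux; first exact: (haus_ge0 A B b0 Bb0).
  + exact: haus_le2.
  + by move=> y By; apply: haus_le2.
Qed.

End Aux.
Section Aux2.
Variables (R : realType) (X : Type) (dist : X -> X -> R).
Hypothesis Hm : is_metric dist.

Let dge0 x y : 0 <= dist x y. Proof. by case: Hm. Qed.
Let dxx x : dist x x = 0. Proof. by case: Hm => _ h _ _; apply/h. Qed.
Let dsym x y : dist x y = dist y x. Proof. by case: Hm. Qed.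
Let dtri x y z : dist x z <= dist x y + dist y z. Proof. by case: Hm. Qed.

Lemma closed_openC (A : set X) : mclosed dist A -> mopen dist (~` A).
Proof.
move=> cA x nAx.
have [e [e0 he]] : exists e : R, 0 < e /\ forall a, A a -> e <= dist x a.
  apply: contrapT => hno; apply: nAx; apply: cA => e e0.
  apply: contrapT => hn; apply: hno; exists e; split => // a Aa.
  rewrite leNgt; apply/negP => hlt; apply: hn; by exists a.
exists e => // y dy Ay; have := he _ Ay; by rewrite leNgt dy.
Qed.

Lemma max_in (s : seq R) r : List.In r s -> r <= foldr Num.max 0 s.
Proof.
elim: s => //= a s IH [->|/IH h]; first by rewrite le_max lexx.
by rewrite le_max h orbT.
Qed.

Lemma compact_bounded (K : set X) : mcompact dist K ->
  exists B : R, forall x y, K x -> K y -> dist x y <= B.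
Proof.
move=> cK; case: (pselect (exists x0, K x0)) => [[x0 Kx0]|hno]; last first.
  by exists 0 => x y Kx; exfalso; apply: hno; exists x.
pose U (r : R) := fun y => dist x0 y < r.
have oU : forall r, mopen dist (U r).
  move=> r y Uy; exists (r - dist x0 y); first by rewrite subr_gt0.
  move=> z dz; rewrite /U; apply: le_lt_trans (dtri x0 y z) _.
  by rewrite -ltrBrDl.
have [|s hs] := cK R U oU.
  move=> y Ky; exists (dist x0 y + 1) => //; rewrite /U ltrDl //.
set B := foldr Num.max 0 s.
have hb : forall y, K y -> dist x0 y <= B.
  move=> y /hs [r /max_in rs Uy]; apply: ltW; apply: lt_le_trans Uy rs.
exists (B + B) => x y Kx Ky; apply: le_trans (dtri x x0 y) _.
by rewrite dsym; apply: lerD; apply: hb.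
Qed.

Lemma chain_inter (K : set X) (C : set (set X)) : mcompact dist K ->
  (exists A, C A) ->
  (forall A, C A -> [/\ A `<=` K, mclosed dist A & exists x, A x]) ->
  (forall A B, C A -> C B -> A `<=` B \/ B `<=` A) ->
  exists x, forall A, C A -> A x.
Proof.
move=> cK [A1 CA1] hC tot; apply: contrapT => hno.
pose I := {A | C A}.
pose U (i : I) := ~` (sval i).
have oU : forall i, mopen dist (U i).
  by move=> [A CA]; apply: closed_openC; have [] := hC A CA.
have [|s hs] := cK I U oU.
  move=> x Kx.
  have [A [CA nAx]] : exists A, C A /\ ~ A x.
    apply: contrapT => hh; apply: hno; exists x => A CA.
    by apply: contrapT => nAx; apply: hh; exists A.
  by exists (exist _ A CA).
have [A0 [CA0 hA0]] : exists A0, C A0 /\ forall i, List.In i s -> A0 `<=` sval i.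
  elim: s {hs} => [|i s [A0 [CA0 hA0]]]; first by exists A1.
  case: (tot A0 (sval i) CA0 (svalP i)) => h.
    exists A0; split => // j /= [<-|/hA0] //.
  exists (sval i); split; first exact: svalP.
  move=> j /= [<-|/hA0 h'] //; exact: subset_trans h h'.
have [_ _ [x A0x]] := hC A0 CA0.
have [K0 _ _] := hC A0 CA0.
have [i si Ui] := hs x (K0 x A0x).
by apply: Ui; apply: (hA0 i si).
Qed.

End Aux2.


Arguments dpt_le {R X dist}.
Arguments dpt_ge0 {R X dist}.
Arguments dpt_lt {R X dist}.
Arguments haus_le1 {R X dist}.
Arguments haus_le2 {R X dist}.
Arguments haus_leP {R X dist}.
Arguments haus_sym {R X dist}.
Arguments haus_ge0 {R X dist}.
Arguments haus_ge0l {R X dist}.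
Arguments dpt_tri {R X dist}.
Arguments tri_aux {R X dist}.
Arguments haus_tri {R X dist}.
Arguments closed_openC {R X dist}.
Arguments compact_bounded {R X dist}.
Arguments chain_inter {R X dist}.
Lemma inter_Sigma (R : realType) (X : Type) (dist : X -> X -> R)
  (Hmetric : is_metric dist)
  (F : set X) (HF : PCl dist F)
  (n : nat) (M : 'I_n -> set X) (HM : forall i, in_class dist F (M i))
  (d : 'I_n -> \bar R)
  (K : set X) (HKc : mcompact dist K) (HK : Sigma_d dist F M d K)
  (Ch : set (set X)) (ne : exists A, Ch A)
  (hCh : forall A, Ch A -> A `<=` K /\ Sigma_d dist F M d A)
  (tot : forall A B, Ch A -> Ch B -> A `<=` B \/ B `<=` A) :
  Sigma_d dist F M d (fun x => forall A, Ch A -> A x).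
Proof.
have dtri x y z : dist x z <= dist x y + dist y z by case: Hmetric.
have dxx x : dist x x = 0 by case: Hmetric => _ h _ _; apply/h.
have dsym x y : dist x y = dist y x by case: Hmetric.
set K' := fun x => forall A, Ch A -> A x.
have [A1 CA1] := ne.
have K'K : K' `<=` K by move=> x h; exact: (hCh A1 CA1).1 x (h A1 CA1).
have cl A : Ch A -> mclosed dist A.
  by move=> CA; have [_ [[[[_ ?] _] _] _]] := hCh A CA.
have nA A : Ch A -> exists x, A x.
  by move=> CA; have [_ [[[[? _] _] _] _]] := hCh A CA.
have dA A : Ch A -> forall j, hausdorff dist A (M j) = d j.
  by move=> CA j; have [_ [_ <-]] := hCh A CA.
have [x0 K'x0] : exists x, K' x.
  apply: (chain_inter _ _ HKc ne) => // A CA; split.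
  - exact: (hCh A CA).1.
  - exact: cl.
  - exact: nA.
have clK' : mclosed dist K'.
  move=> x hx A CA; apply: (cl A CA) => e e0.
  by have [a [K'a da]] := hx e e0; exists a; split => //; apply: K'a.
have [[[_ _] HKF] HKmin] := HK.1.
have HKd : forall j, hausdorff dist K (M j) = d j.
  by move=> j; have := HK.2; move=> /(congr1 (fun f => f j)).
have [f0 Ff0] := HF.1.
have fin j : (d j < +oo)%E.
  rewrite -HKd; have ht := haus_tri Hmetric K F (M j) f0 Ff0; apply: (le_lt_trans ht).
  apply: lte_add_pinfty => //; rewrite haus_sym; exact: (HM j).2.
have d0 j : (0 <= d j)%E.
  by have [a A1a] := nA A1 CA1; rewrite -(dA A1 CA1 j); exact: haus_ge0l _ _ _ A1a.
have le_d j : (hausdorff dist K' (M j) <= d j)%E.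
  apply: haus_leP => [a K'a|b Mb].
    rewrite -(dA A1 CA1 j); exact: haus_le1 _ _ _ (K'a A1 CA1).
  apply/lee_addgt0Pr => e e0.
  have := fin j; have := d0 j; case E: (d j) => [r| |] // _ _.
  pose ball := fun a => dist b a <= r + e.
  have [x hx] : exists x, forall Y, (fun Y => exists2 A, Ch A & Y = A `&` ball) Y -> Y x.
    apply: (chain_inter _ _ HKc).
    - by exists (A1 `&` ball), A1.
    - move=> _ [A CA ->]; split.
      + by move=> x [Ax _]; exact: (hCh A CA).1.
      + move=> x hx; split.
          apply: (cl A CA) => e' e'0.
          by have [a [[Aa _] da]] := hx e' e'0; exists a.
        rewrite /ball; apply/ler_addgt0Pr => e' e'0.
        have [a [[_ ba] da]] := hx e' e'0.
        apply: le_trans (dtri b a x) _; apply: lerD => //.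
        by rewrite dsym ltW.
      + have : (dist_pt_set dist b A < (r + e)%:E)%E.
          apply: le_lt_trans (haus_le2 A (M j) b Mb) _.
          by rewrite dA // E lte_fin ltrDl.
        by move=> /(dpt_lt _ _ _) [a Aa ba]; exists a; split => //; rewrite /ball ltW.
    - move=> _ _ [A CA ->] [B CB ->].
      by case: (tot A B CA CB) => h; [left|right]; apply: setSI.
  have K'x : K' x by move=> A CA; have [] := hx (A `&` ball) (ex_intro2 _ _ A CA erefl).
  have [_ bx] := hx (A1 `&` ball) (ex_intro2 _ _ A1 CA1 erefl).
  by apply: le_trans (dpt_le b K' x K'x) _; rewrite -EFinD lee_fin.
have [B hB] := compact_bounded Hmetric K HKc.
have inK' : in_class dist F K'.
  split; first by split; [exists x0|].
  apply: le_lt_trans (haus_tri Hmetric K' K F x0 (K'K x0 K'x0)) _.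
  apply: lte_add_pinfty => //.
  apply: (@le_lt_trans _ _ B%:E); last exact: ltry.
  apply: haus_leP => [a K'a|k Kk].
    by apply: le_trans (dpt_le a K a (K'K a K'a)) _; rewrite lee_fin hB //; apply: K'K.
  by apply: le_trans (dpt_le k K' x0 K'x0) _; rewrite lee_fin hB //; apply: K'K.
have SK' : (S_M dist M K' <= S_M dist M K)%E.
  by apply: lee_sum => i _; rewrite HKd.
split; first by split => // Y hY; apply: le_trans SK' (HKmin Y hY).
have hsum := HKmin K' inK'.
rewrite /S_M in hsum.
have x0M j : (0 <= hausdorff dist K' (M j))%E by exact: haus_ge0l _ _ _ K'x0.
have finx j : hausdorff dist K' (M j) \is a fin_num.
  by rewrite ge0_fin_numE //; apply: le_lt_trans (le_d j) (fin j).
have find j : d j \is a fin_num by rewrite ge0_fin_numE.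
have ed : (\sum_(i < n) hausdorff dist K (M i) = (\sum_(i < n) fine (d i))%:E)%E.
  by rewrite -sumEFin; apply: eq_bigr => i _; rewrite HKd fineK.
have ex : (\sum_(i < n) hausdorff dist K' (M i) =
    (\sum_(i < n) fine (hausdorff dist K' (M i)))%:E)%E.
  by rewrite -sumEFin; apply: eq_bigr => i _; rewrite fineK.
rewrite ed ex lee_fin in hsum.
have le_r j : fine (hausdorff dist K' (M j)) <= fine (d j).
  by rewrite -lee_fin !fineK.
have h0 : \sum_(i < n) (fine (d i) - fine (hausdorff dist K' (M i))) = 0.
  apply/eqP; rewrite eq_le sumrB subr_le0 hsum /=.
  by rewrite -sumrB; apply: sumr_ge0 => i _; rewrite subr_ge0.
apply: funext => j; rewrite /dvec.
have hge : forall i : 'I_n, true -> 0 <= fine (d i) - fine (hausdorff dist K' (M i)).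
  by move=> i _; rewrite subr_ge0.
have := psumr_eq0P hge h0 (i := j) isT.
move/eqP; rewrite subr_eq0 => /eqP hj.
by rewrite -(fineK (finx j)) -hj fineK.
Qed.

Theorem mainTheorem12 (R : realType) (X : Type) (dist : X -> X -> R)
  (Hmetric : is_metric dist)
  (F : set X) (HF : PCl dist F)
  (n : nat) (M : 'I_n -> set X) (HM : forall i, in_class dist F (M i))
  (HSigma : exists K, Sigma dist F M K)
  (d : 'I_n -> \bar R) (Hd : Omega dist F M d)
  (K : set X) (HKc : mcompact dist K) (HK : Sigma_d dist F M d K) :
  exists K0 : set X, K0 `<=` K /\ minimal_in_Sigma_d dist F M d K0.
Proof.
pose P := fun A : set X => A `<=` K /\ Sigma_d dist F M d A.
pose T := {A : set X | P A}.
pose Rl := fun s t : T => `[< sval t `<=` sval s >].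
have [t ht] : exists t, forall s, Rl t s -> s = t.
  apply: (@Zorn T Rl).
  - by move=> s; apply/asboolP.
  - move=> r s t /asboolP h1 /asboolP h2; apply/asboolP.
    exact: subset_trans h2 h1.
  - move=> [s Ps] [t Pt] /asboolP h1 /asboolP h2; apply: eq_exist.
    by apply/seteqP; split.
  - move=> A totA.
    case: (pselect (exists s, A s)) => [[s0 As0]|hno]; last first.
      exists (exist P K (conj (@subset_refl _ K) HK)) => s As.
      by exfalso; apply: hno; exists s.
    pose Ch := fun Y => exists2 s, A s & Y = sval s.
    have hS := @inter_Sigma R X dist Hmetric F HF n M HM d K HKc HK Ch
      (ex_intro _ (sval s0) (ex_intro2 _ _ s0 As0 erefl)).
    have hP : P (fun x => forall A0, Ch A0 -> A0 x).
      split.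
        move=> x hx; have := hx (sval s0) (ex_intro2 _ _ s0 As0 erefl).
        by have [] := svalP s0 => + _; apply.
      apply: hS.
      - by move=> _ [s As ->]; exact: svalP s.
      - move=> _ _ [s As ->] [u Au ->].
        by case: (totA s u As Au) => /asboolP h; [right|left].
    exists (exist P _ hP) => s As; apply/asboolP => x /= hx.
    by apply: hx; exists s.
exists (sval t); split; first by have [] := svalP t.
split; first by have [] := svalP t.
move=> K' HK' sub.
have PK' : P K' by split => //; apply: subset_trans sub _; have [] := svalP t.
have := ht (exist P K' PK'); rewrite /Rl /= => h.
have e := h (asboolT sub); by rewrite -e.
Qed.
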